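(* Let $r\in\mathbb{N}$, let $\Theta$ be a compact parameter set with $\theta^*\in\Theta$, and for each $\theta\in\Theta$ let $f_\theta:\mathbb{N}_0\times\mathbb{R}_+\to\mathbb{R}_+$ be measurable. Suppose there are non-negative constants $a,b$ with $a+b<1$ such that for all $(y,\lambda),(y',\lambda')\in\mathbb{N}_0\times\mathbb{R}_+$, $$\sup_{\theta\in\Theta}\big|f_\theta(y,\lambda)-f_\theta(y',\lambda')\big|\le a|y-y'|+b|\lambda-\lambda'|.$$ Let $\{(Y_t,\lambda_t)\}$ be the strictly stationary solution of $$Y_t\mid\mathcal{F}_{t-1}\sim NB(r,p_t),\qquad r\frac{1-p_t}{p_t}=\lambda_t=f_{\theta^*}(Y_{t-1},\lambda_{t-1}),$$ where $\mathcal{F}_{t-1}=\sigma(Y_{t-1},Y_{t-2},\dots)$. If $$(a+b)^2+\frac{a^2}{r}<1,$$ then $\mathbb{E}(Y_t^2)<\infty$ for all $t\in\mathbb{Z}$.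
   Context: $NB(r,p)$ denotes the negative binomial distribution with parameters $r$ and $p$, having mean $r(1-p)/p$ and variance $r(1-p)/p^2$. *)

(* Defs.v *)
From HB Require Import structures.
From mathcomp Require Import all_boot all_order all_algebra.
From mathcomp Require Import all_classical all_reals all_analysis.
Set Implicit Arguments. Unset Strict Implicit. Unset Printing Implicit Defensive.
Import Order.TTheory GRing.Theory Num.Theory.
Import numFieldNormedType.Exports.
Local Open Scope classical_set_scope.
Local Open Scope ring_scope.

(* pmf at k of NB(r,p) with p = r/(r+lam), i.e. mean r(1-p)/p = lam *)
Definition nb_p {R : realType} (r : nat) (lam : R) : R := r%:R / (r%:R + lam).
Definition nb_pmf {R : realType} (r : nat) (lam : R) (k : nat) : R :=
  'C(k + r - 1, k)%:R * (nb_p r lam) ^+ r * (1 - nb_p r lam) ^+ k.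

Definition past_sigma {d} {T : measurableType d} (Y : int -> T -> nat) (t : int)
  : set (set T) :=
  <<s [set A | exists s (B : set nat), (s <= t)%R /\ A = Y s @^-1` B] >>.

(* strict stationarity of (Y_t, lam_t)_{t in Z}: finite-dimensional laws
   (determined by rectangles) are shift invariant *)
Definition strictly_stationary {d} {T : measurableType d} {R : realType}
  (P : probability T R) (Y : int -> T -> nat) (lam : int -> T -> R) : Prop :=
  forall (n : nat) (ts : 'I_n -> int) (h : int)
         (B : 'I_n -> set nat) (C : 'I_n -> set R),
    (forall i, measurable (C i)) ->
    P (\bigcap_i [set x | B i (Y (ts i) x) /\ C i (lam (ts i) x)]) =
    P (\bigcap_i [set x | B i (Y (ts i + h)%R x) /\ C i (lam (ts i + h)%R x)]).

(* Main.v *)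
Require Import Defs.
From HB Require Import structures.
From mathcomp Require Import all_boot all_order all_algebra.
From mathcomp Require Import all_classical all_reals all_analysis.
From mathcomp Require Import ring lra zify.
From mathcomp Require Import measurable_realfun.
Import Order.TTheory GRing.Theory Num.Theory.
Import numFieldNormedType.Exports.
Local Open Scope classical_set_scope.
Local Open Scope ring_scope.

Definition Sb {R : realFieldType} (q : R) (m N : nat) : R :=
  \sum_(k < N) 'C(k + m, k)%:R * q ^+ k.

Lemma Sb_mono (R : realFieldType) (q : R) m N : 0 <= q -> Sb q m N <= Sb q m N.+1.
Proof.
move=> q0; rewrite /Sb big_ord_recr /= lerDl.
by rewrite mulr_ge0 // exprn_ge0.
Qed.

Lemma Sb_rec (R : realFieldType) (q : R) m N : Sb q m.+1 N.+1 = Sb q m N.+1 + q * Sb q m.+1 N.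
Proof.
rewrite /Sb big_ord_recl [X in _ = X + _]big_ord_recl /= !bin0 -addrA.
congr (_ + _); rewrite mulr_sumr -big_split /=; apply: eq_bigr => k _.
rewrite /bump /= !add1n.
rewrite (_ : (k.+1 + m.+1)%N = (k + m.+1).+1) ?addSn // binS natrD exprS.
rewrite (_ : (k + m.+1)%N = (k.+1 + m)%N); last by rewrite addnS addSn.
ring.
Qed.

Lemma Sb_bound (R : realFieldType) (q : R) m N : 0 <= q < 1 -> (1 - q) ^+ m.+1 * Sb q m N <= 1.
Proof.
move=> /andP[q0 q1]; elim: m N => [|m IH] N.
  rewrite expr1 /Sb.
  have -> : \sum_(k < N) 'C(k + 0, k)%:R * q ^+ k = \sum_(k < N) q ^+ k.
    by apply: eq_bigr => k _; rewrite addn0 binn mul1r.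
  rewrite -opprB mulNr -subrX1 opprB.
  by rewrite lerBlDr lerDl exprn_ge0.
have h := IH N.+1; have e := @Sb_rec _ q m N.
rewrite exprSr -mulrA; apply: le_trans h; apply: ler_wpM2l; first by rewrite exprn_ge0 // subr_ge0 ltW.
have := @Sb_mono _ q m.+1 N q0; move: e; set u := Sb q m.+1 N.+1; set v := Sb q m N.+1; set w := Sb q m.+1 N.
move=> e h; have -> : v = u - q * w by rewrite e; ring.
by rewrite mulrBl mul1r lerD2r.
Qed.

Lemma shift_sum (R : realFieldType) (q : R) (w : nat -> R) m N :
  \sum_(k < N.+1) w k * k%:R * 'C(k + m, k)%:R * q ^+ k =
  m.+1%:R * q * \sum_(k < N) w k.+1 * 'C(k + m.+1, k)%:R * q ^+ k.
Proof.
rewrite big_ord_recl /= mulr0 mul0r mul0r add0r mulr_sumr; apply: eq_bigr => k _.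
rewrite /bump /= add1n exprS.
have : (k.+1 * 'C(k.+1 + m, k.+1) = m.+1 * 'C(k + m.+1, k))%N.
  by rewrite mul_bin_left addSn -addnS addKn.
move=> /(congr1 (fun n => n%:R : R)); rewrite !natrM => e.
rewrite -[w k.+1 * _ * _]mulrA e; ring.
Qed.

Lemma shift_sum1 (R : realFieldType) (q : R) m N :
  \sum_(k < N.+1) k%:R * 'C(k + m, k)%:R * q ^+ k =
  m.+1%:R * q * Sb q m.+1 N.
Proof.
rewrite /Sb big_ord_recl /= mul0r mul0r add0r mulr_sumr; apply: eq_bigr => k _.
rewrite /bump /= add1n exprS.
have : (k.+1 * 'C(k.+1 + m, k.+1) = m.+1 * 'C(k + m.+1, k))%N.
  by rewrite mul_bin_left addSn -addnS addKn.
move=> /(congr1 (fun n => n%:R : R)); rewrite !natrM => e.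
rewrite e; ring.
Qed.

Lemma sum_le_S (R : realFieldType) (g : nat -> R) N :
  (forall k, 0 <= g k) -> \sum_(k < N) g k <= \sum_(k < N.+1) g k.
Proof. by move=> g0; rewrite big_ord_recr /= lerDl. Qed.

Lemma F0 (R : realFieldType) (p : R) r' N : 0 < p <= 1 ->
  p ^+ r'.+1 * Sb (1 - p) r' N <= 1.
Proof.
move=> /andP[p0 p1]; have := @Sb_bound _ (1 - p) r' N; rewrite (_ : 1 - (1 - p) = p); last by ring.
apply.
by rewrite subr_ge0 p1 /= ltrBlDr ltrDl.
Qed.

Lemma F1 (R : realFieldType) (p : R) r' N : 0 < p <= 1 ->
  p ^+ r'.+1 * \sum_(k < N) k%:R * 'C(k + r', k)%:R * (1 - p) ^+ k
   <= r'.+1%:R * (1 - p) / p.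
Proof.
move=> /andP[p0 p1]; set q := 1 - p.
have q0 : 0 <= q by rewrite subr_ge0.
apply: (@le_trans _ _ (p ^+ r'.+1 * \sum_(k < N.+1) k%:R * 'C(k + r', k)%:R * q ^+ k)).
  apply: ler_wpM2l; first by rewrite exprn_ge0 // ltW.
  by apply: (@sum_le_S _ (fun k => k%:R * 'C(k + r', k)%:R * q ^+ k)) => k; rewrite !mulr_ge0 // exprn_ge0.
rewrite shift_sum1.
have h := @F0 _ p r'.+1 N (ltac:(by rewrite p0 p1)); rewrite -/q in h.
set S := Sb q r'.+1 N in h *.
have -> : p ^+ r'.+1 * (r'.+1%:R * q * S) = r'.+1%:R * q / p * (p ^+ r'.+2 * S).
  rewrite !exprS; set P := p ^+ r'; field; by rewrite gt_eqF.
rewrite -[X in _ <= X]mulr1; apply: ler_wpM2l => //.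
by rewrite !mulr_ge0 // invr_ge0 ltW.
Qed.

Lemma shift_sumw (R : realFieldType) (q : R) m N :
  \sum_(k < N.+1) (k%:R - 1) * k%:R * 'C(k + m, k)%:R * q ^+ k =
  m.+1%:R * q * \sum_(k < N) k%:R * 'C(k + m.+1, k)%:R * q ^+ k.
Proof.
rewrite big_ord_recl /= mulr0 mul0r mul0r add0r mulr_sumr; apply: eq_bigr => k _.
rewrite /bump /= add1n exprS.
have : (k.+1 * 'C(k.+1 + m, k.+1) = m.+1 * 'C(k + m.+1, k))%N.
  by rewrite mul_bin_left addSn -addnS addKn.
move=> /(congr1 (fun n => n%:R : R)); rewrite !natrM => e.
rewrite -[(_ - 1) * _ * _]mulrA e -natr1; ring.
Qed.

Lemma km1_ge0 (R : realFieldType) (k : nat) : 0 <= (k%:R - 1) * k%:R :> R.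
Proof. case: k => [|k]; first by rewrite mulr0. by rewrite mulr_ge0 // -natr1 addrK. Qed.

Lemma F2 (R : realFieldType) (p : R) r' N : 0 < p <= 1 ->
  p ^+ r'.+1 * \sum_(k < N) (k%:R - 1) * k%:R * 'C(k + r', k)%:R * (1 - p) ^+ k
   <= r'.+1%:R * r'.+2%:R * (1 - p) ^+ 2 / p ^+ 2.
Proof.
move=> /andP[p0 p1]; set q := 1 - p.
have q0 : 0 <= q by rewrite subr_ge0.
set g := fun k : nat => (k%:R - 1) * k%:R * 'C(k + r', k)%:R * q ^+ k.
have g0 k : 0 <= g k by rewrite /g -mulrA mulr_ge0 ?km1_ge0 // mulr_ge0 // exprn_ge0.
apply: (@le_trans _ _ (p ^+ r'.+1 * \sum_(k < N.+2) g k)).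
  apply: ler_wpM2l; first by rewrite exprn_ge0 // ltW.
  by have := le_trans (@sum_le_S _ g N g0) (@sum_le_S _ g N.+1 g0).
rewrite /g shift_sumw shift_sum1.
have h := @F0 _ p r'.+2 N (ltac:(by rewrite p0 p1)); rewrite -/q in h.
set S := Sb q r'.+2 N in h *.
have -> : p ^+ r'.+1 * (r'.+1%:R * q * (r'.+2%:R * q * S)) =
     r'.+1%:R * r'.+2%:R * q ^+ 2 / p ^+ 2 * (p ^+ r'.+3 * S).
  rewrite !exprS; set P := p ^+ r'; field; by rewrite gt_eqF.
rewrite -[X in _ <= X]mulr1; apply: ler_wpM2l => //.
by rewrite !mulr_ge0 // ?exprn_ge0 // invr_ge0 exprn_ge0 // ltW.
Qed.

Lemma nb_bound (R : realType) (r : nat) (lam : R) (al be ga : R) N :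
  (0 < r)%N -> 0 <= lam -> 0 <= al -> 0 <= be -> 0 <= ga ->
  \sum_(k < N) (al + be * k%:R + ga * k%:R ^+ 2) * nb_pmf r lam k
  <= al + be * lam + ga * (lam + (1 + r%:R^-1) * lam ^+ 2).
Proof.
case: r => [//|r'] _ l0 a0 b0 g0.
set p := nb_p r'.+1 lam; set q := 1 - p.
have rp : 0 < r'.+1%:R :> R by rewrite ltr0n.
have rl : 0 < r'.+1%:R + lam by rewrite ltr_wpDr.
have p0 : 0 < p by rewrite /p /nb_p divr_gt0.
have p1 : p <= 1 by rewrite /p /nb_p ler_pdivrMr // mul1r lerDl.
have pp : 0 < p <= 1 by rewrite p0 p1.
have E : \sum_(k < N) (al + be * k%:R + ga * k%:R ^+ 2) * nb_pmf r'.+1 lam k =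
  al * (p ^+ r'.+1 * Sb q r' N) +
  (be + ga) * (p ^+ r'.+1 * \sum_(k < N) k%:R * 'C(k + r', k)%:R * (1 - p) ^+ k) +
  ga * (p ^+ r'.+1 * \sum_(k < N) (k%:R - 1) * k%:R * 'C(k + r', k)%:R * (1 - p) ^+ k).
  rewrite /Sb !mulr_sumr -!big_split; apply: eq_bigr => k _ /=.
  rewrite /nb_pmf -/p addnS subn1 /= -/q; ring.
rewrite E.
apply: (@le_trans _ _ (al * 1 + (be + ga) * (r'.+1%:R * (1 - p) / p) +
    ga * (r'.+1%:R * r'.+2%:R * (1 - p) ^+ 2 / p ^+ 2))).
  apply: lerD; first apply: lerD.
  - by apply: ler_wpM2l => //; exact: F0.
  - by apply: ler_wpM2l; [exact: addr_ge0 | exact: F1].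
  - by apply: ler_wpM2l => //; exact: F2.
rewrite /p /nb_p.
have rl0 : r'.+1%:R + lam != 0 by rewrite gt_eqF.
have rn0 : r'.+1%:R != 0 :> R by rewrite gt_eqF.
rewrite le_eqVlt; apply/orP; left; apply/eqP.
move: rn0 rl0; rewrite -!natr1 => rn0 rl0.
field.
by rewrite rn0 rl0.
Qed.
Lemma mnat (R : realType) (g : nat -> R) : measurable_fun setT g.
Proof. by move=> _ B _. Qed.

Lemma mYg (R : realType) d (T : measurableType d) (Y : T -> nat) (g : nat -> R) :
  measurable_fun setT Y -> measurable_fun setT (fun x => g (Y x)).
Proof. by move=> mY; exact: (measurableT_comp (@mnat R g) mY). Qed.

Lemma past_meas d (T : measurableType d) (Y : int -> T -> nat) u A :
  (forall t, measurable_fun setT (Y t)) -> past_sigma Y u A -> measurable A.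
Proof.
move=> mY; apply: smallest_sub; first exact: sigma_algebra_measurable.
move=> _ [s [B [_ ->]]]; rewrite -[_ @^-1` _]setTI; exact: mY.
Qed.

Lemma past_mono d (T : measurableType d) (Y : int -> T -> nat) (u v : int) A :
  (u <= v)%R -> past_sigma Y u A -> past_sigma Y v A.
Proof.
move=> uv; apply: sub_sigma_algebra2 => _ [s [B [su ->]]].
by exists s, B; split => //; apply: le_trans uv.
Qed.

Lemma past_setI d (T : measurableType d) (Y : int -> T -> nat) u A B :
  past_sigma Y u A -> past_sigma Y u B -> past_sigma Y u (A `&` B).
Proof.
move=> hA hB.
exact: (@measurableI _ (g_sigma_algebraType [set A | exists s (B : set nat), (s <= u)%R /\ A = Y s @^-1` B]) A B hA hB).
Qed.

Lemma past_setT d (T : measurableType d) (Y : int -> T -> nat) u :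
  past_sigma Y u setT.
Proof.
exact: (@measurableT _ (g_sigma_algebraType [set A | exists s (B : set nat), (s <= u)%R /\ A = Y s @^-1` B])).
Qed.

Lemma m_pmf (R : realType) (r : nat) d (T : measurableType d) (l : T -> R) k :
  (0 < r)%N -> measurable_fun setT l -> (forall x, 0 <= l x) ->
  measurable_fun setT (fun x => nb_pmf r (l x) k).
Proof.
move=> r0 ml l0.
pose psi := fun x : R => r%:R / (r%:R + Num.max x 0).
have rp : 0 < r%:R :> R by rewrite ltr0n.
have mpsi : measurable_fun setT psi.
  apply: measurable_realfun.nonincreasing_measurable => // x y xy.
  rewrite /psi ler_pdivrMr ?ltr_wpDr ?le_max ?lexx ?orbT //.
  rewrite mulrAC ler_pdivlMr ?ltr_wpDr ?le_max ?lexx ?orbT //.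
  by rewrite ler_pM2l // lerD2l ge_max !le_max xy lexx orbT.
have mp : measurable_fun setT (fun x => nb_p r (l x)).
  have -> : (fun x => nb_p r (l x)) = psi \o l.
    by apply/funext => x; rewrite /psi /nb_p /= max_l.
  exact: measurableT_comp.
rewrite /nb_pmf.
apply: measurable_realfun.measurable_funM; first apply: measurable_realfun.measurable_funM.
- exact: measurable_cst.
- exact: measurable_realfun.measurable_funX.
- apply: measurable_realfun.measurable_funX; apply: measurable_realfun.measurable_funB => //; exact: measurable_cst.
Qed.

Lemma nb_p_bd (R : realType) (r : nat) (lam : R) :
  (0 < r)%N -> 0 <= lam -> 0 < nb_p r lam <= 1.
Proof.
move=> r0 l0; have rp : 0 < r%:R :> R by rewrite ltr0n.
have rl : 0 < r%:R + lam by rewrite ltr_wpDr.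
by rewrite /nb_p divr_gt0 //= ler_pdivrMr // mul1r lerDl.
Qed.

Lemma pmf_ge0 (R : realType) (r : nat) (lam : R) k :
  (0 < r)%N -> 0 <= lam -> 0 <= nb_pmf r lam k.
Proof.
move=> r0 l0; have /andP[p0 p1] := @nb_p_bd R r lam r0 l0.
by rewrite /nb_pmf !mulr_ge0 // exprn_ge0 // ?subr_ge0 // ltW.
Qed.

Lemma L_cond (R : realType) (r : nat) d (T : measurableType d) (P : probability T R)
  (Y : int -> T -> nat) (lam : int -> T -> R) (s : int) (B : set T) (al be ga : R) :
  (0 < r)%N ->
  (forall t, measurable_fun setT (Y t)) -> (forall t, measurable_fun setT (lam t)) ->
  (forall t x, 0 <= lam t x) ->
  (forall (A : set T) (k : nat), past_sigma Y (s - 1) A ->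
     P (A `&` Y s @^-1` [set k]) = (\int[P]_(x in A) (nb_pmf r (lam s x) k)%:E)%E) ->
  past_sigma Y (s - 1) B -> 0 <= al -> 0 <= be -> 0 <= ga ->
  (\int[P]_(x in B) (al + be * (Y s x)%:R + ga * (Y s x)%:R ^+ 2)%:E <=
   \int[P]_(x in B) (al + be * lam s x + ga * (lam s x + (1 + r%:R^-1) * lam s x ^+ 2))%:E)%E.
Proof.
move=> r0 mY mlam lam0 hY hB a0 b0 g0.
have mB : measurable B by exact: past_meas hB.
set h := fun n : nat => al + be * n%:R + ga * n%:R ^+ 2.
have h0 n : 0 <= h n by rewrite /h !addr_ge0 ?mulr_ge0 ?exprn_ge0.
pose F n := B `&` Y s @^-1` [set n].
have mF n : measurable (F n).
  by apply: measurableI => //; rewrite -[_ @^-1` _]setTI; exact: mY.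
have eB : B = \bigcup_n F n.
  by apply/seteqP; split => [x Bx|x [n _ []//]]; exists (Y s x) => //.
have tF : trivIset setT F.
  apply/trivIsetP => i j _ _ ij; apply/seteqP; split => [x [[_ hi] [_ hj]]|//].
  by move: ij; rewrite /= in hi hj; rewrite -hi -hj eqxx.
have mh : measurable_fun setT (fun x => h (Y s x)) by exact: mYg (mY s).
have -> : (\int[P]_(x in B) (al + be * (Y s x)%:R + ga * (Y s x)%:R ^+ 2)%:E =
   \int[P]_(x in B) (h (Y s x))%:E)%E by [].
rewrite {1}eB ge0_integral_bigcup //; last 2 first.
- by apply/measurable_realfun.measurable_EFinP; apply: measurable_funTS.
- by move=> x _; rewrite lee_fin.
have mpmf n : measurable_fun setT (fun x => nb_pmf r (lam s x) n) by exact: m_pmf.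
have pmf0 n x : 0 <= nb_pmf r (lam s x) n by exact: pmf_ge0.
have e1 n : (\int[P]_(x in F n) (h (Y s x))%:E =
    \int[P]_(x in B) (h n * nb_pmf r (lam s x) n)%:E)%E.
  transitivity (\int[P]_(x in F n) (cst (h n)%:E) x)%E.
    by apply: eq_integral => x; rewrite inE => -[_ /= ->].
  rewrite integral_cst //.
  transitivity ((h n)%:E * \int[P]_(x in B) (nb_pmf r (lam s x) n)%:E)%E.
    by congr (_ * _)%E; exact: (hY B n hB).
  rewrite -ge0_integralZl //.
  - by apply/measurable_realfun.measurable_EFinP; apply: measurable_funTS.
  - by move=> x _; rewrite lee_fin.
  - by rewrite lee_fin.
rewrite (eq_eseriesr (fun n _ => e1 n)) -integral_nneseries //; last 2 first.
- move=> n; apply/measurable_realfun.measurable_EFinP; apply: measurable_funTS.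
  by apply: measurable_realfun.measurable_funM => //; exact: measurable_cst.
- by move=> n x _; rewrite lee_fin mulr_ge0.
apply: ge0_le_integral => //.
- by move=> x _; apply: nneseries_ge0 => n _ _; rewrite lee_fin mulr_ge0.
- have := @ge0_emeasurable_sum _ _ _ B (fun n x => (h n * nb_pmf r (lam s x) n)%:E) predT.
  apply.
  + by move=> n x _ _; rewrite lee_fin mulr_ge0.
  + move=> n _; apply/measurable_realfun.measurable_EFinP; apply: measurable_funTS.
    by apply: measurable_realfun.measurable_funM => //; exact: measurable_cst.
- apply/measurable_realfun.measurable_EFinP; apply: measurable_funTS.
  have ml := mlam s.
  apply: measurable_realfun.measurable_funD; first apply: measurable_realfun.measurable_funD.
  + exact: measurable_cst.
  + by apply: measurable_realfun.measurable_funM => //; exact: measurable_cst.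
  + apply: measurable_realfun.measurable_funM; first exact: measurable_cst.
    apply: measurable_realfun.measurable_funD => //.
    apply: measurable_realfun.measurable_funM; first exact: measurable_cst.
    exact: measurable_realfun.measurable_funX.
- move=> x _; apply: lime_le.
    by apply: is_cvg_nneseries => n _ _; rewrite lee_fin mulr_ge0.
  near=> N; rewrite sumEFin lee_fin big_mkord.
  exact: nb_bound.
Unshelve. all: by end_near.
Qed.

Lemma L_step (R : realType) (r : nat) d (T : measurableType d) (P : probability T R)
  (Y : int -> T -> nat) (lam : int -> T -> R) (t : int) (A : set T) (a b c rho K : R) :
  (0 < r)%N ->
  (forall t, measurable_fun setT (Y t)) -> (forall t, measurable_fun setT (lam t)) ->
  (forall t x, 0 <= lam t x) ->
  (forall (A : set T) (k : nat), past_sigma Y (t - 1 - 1) A ->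
     P (A `&` Y (t - 1) @^-1` [set k]) = (\int[P]_(x in A) (nb_pmf r (lam (t - 1) x) k)%:E)%E) ->
  (forall B, measurable B -> past_sigma Y (t - 1 - 1) (lam (t - 1) @^-1` B)) ->
  (forall x, lam t x <= c + a * (Y (t - 1) x)%:R + b * lam (t - 1) x) ->
  0 <= a -> 0 <= b -> 0 <= c -> 0 <= rho -> 0 <= K ->
  (forall x, 0 <= x -> (c + b + b * x) ^+ 2 + 2 * a * (c + b + b * x) * x +
      a ^+ 2 * (x + (1 + r%:R^-1) * x ^+ 2) <= rho * x ^+ 2 + K) ->
  past_sigma Y (t - 1 - 1) A ->
  (\int[P]_(x in A) (lam t x ^+ 2)%:E <=
    rho%:E * \int[P]_(x in A) (lam (t - 1) x ^+ 2)%:E + K%:E * P A)%E.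
Proof.
move=> r0 mY mlam lam0 hY hlam hf a0 b0 c0 rho0 K0 hG hA.
set s := t - 1.
have mA : measurable A by exact: past_meas hA.
pose F (j : nat) := A `&` lam s @^-1` `[j%:R, j.+1%:R[.
have hF j : past_sigma Y (s - 1) (F j).
  by apply: past_setI => //; apply: hlam; exact: measurable_itv.
have mF j : measurable (F j) by exact: past_meas (hF j).
have eA : A = \bigcup_j F j.
  apply/seteqP; split => [x Ax|x [j _ []//]].
  exists (Num.truncn (lam s x)) => //; split => //=.
  by rewrite in_itv /=; exact: truncn_itv.
have tF : trivIset setT F.
  apply/trivIsetP => i j _ _ ij; apply/seteqP; split => [x [[_ hi] [_ hj]]|//].
  move: hi hj; rewrite /= !in_itv /= => /andP[i1 i2] /andP[j1 j2].
  have := le_lt_trans i1 j2; have := le_lt_trans j1 i2; rewrite !ltr_nat => h1 h2.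
  have eij : i = j by apply/eqP; rewrite eqn_leq -ltnS h2 -ltnS h1.
  by rewrite eij eqxx in ij.
have mlt : measurable_fun setT (fun x => (lam t x ^+ 2)%:E : \bar R).
  by apply/measurable_realfun.measurable_EFinP; exact: measurable_realfun.measurable_funX.
have mls : measurable_fun setT (fun x => (rho * lam s x ^+ 2 + K)%:E : \bar R).
  apply/measurable_realfun.measurable_EFinP; apply: measurable_realfun.measurable_funD; last exact: measurable_cst.
  apply: measurable_realfun.measurable_funM; first exact: measurable_cst.
  exact: measurable_realfun.measurable_funX.
apply: (@le_trans _ _ (\int[P]_(x in A) (rho * lam s x ^+ 2 + K)%:E)%E); last first.
  rewrite le_eqVlt; apply/orP; left; apply/eqP.
  rewrite (eq_integral (fun x => (rho%:E * (lam s x ^+ 2)%:E + K%:E)%E)); last first.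
    by move=> x _; rewrite EFinD EFinM.
  rewrite ge0_integralD //; last 2 first.
  - by move=> x _; rewrite mule_ge0 // lee_fin exprn_ge0.
  - apply: measurable_funTS; apply: emeasurable_funM; first exact: measurable_cst.
    by apply/measurable_EFinP; exact: measurable_funX.
  rewrite ge0_integralZl //.
  - by rewrite integral_cst.
  - by apply/measurable_EFinP; apply: measurable_funTS; exact: measurable_funX.
  - by move=> x _; rewrite lee_fin exprn_ge0.
rewrite eA !ge0_integral_bigcup //; last 4 first.
- exact: measurable_funTS.
- by move=> x _; rewrite lee_fin addr_ge0 // mulr_ge0 // exprn_ge0.
- exact: measurable_funTS.
- by move=> x _; rewrite lee_fin exprn_ge0.
apply: lee_nneseries => [j _ _|j _]; first by apply: integral_ge0 => x _; rewrite lee_fin exprn_ge0.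
have mYs : measurable_fun setT (fun x => (Y s x)%:R : R) by exact: mYg (mY s).
have hFj x : F j x -> j%:R <= lam s x < j.+1%:R by case=> _ /=; rewrite in_itv.
set u := c + b * j.+1%:R.
have u0 : 0 <= u by rewrite addr_ge0 // mulr_ge0.
apply: (@le_trans _ _ (\int[P]_(x in F j) (u ^+ 2 + 2 * a * u * (Y s x)%:R + a ^+ 2 * (Y s x)%:R ^+ 2)%:E)%E).
  apply: ge0_le_integral => //.
  - by move=> x _; rewrite lee_fin exprn_ge0.
  - exact: measurable_funTS.
  - apply/measurable_EFinP; apply: measurable_funTS.
    apply: measurable_funD; first apply: measurable_funD.
    + exact: measurable_cst.
    + by apply: measurable_funM => //; exact: measurable_cst.
    + apply: measurable_funM; first exact: measurable_cst.
      exact: measurable_funX.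
  move=> x /hFj /andP[_ hx]; rewrite lee_fin.
  have l0 := lam0 t x; have ls0 := lam0 s x; have := hf x; rewrite -/s => hfx.
  have y0 : 0 <= (Y s x)%:R :> R by [].
  have hb : b * lam s x <= b * j.+1%:R by rewrite ler_wpM2l // ltW.
  have lw : lam t x <= u + a * (Y s x)%:R by rewrite /u; lra.
  have : lam t x ^+ 2 <= (u + a * (Y s x)%:R) ^+ 2.
    by apply: lerXn2r => //; rewrite nnegrE // (le_trans l0 lw).
  move/le_trans; apply; rewrite le_eqVlt; apply/orP; left; apply/eqP; ring.
apply: le_trans; first apply: (@L_cond R r d T P Y lam s (F j) (u ^+ 2) (2 * a * u) (a ^+ 2)) => //.
all: try by rewrite ?exprn_ge0 ?mulr_ge0.
have ml := mlam s.
apply: ge0_le_integral => //.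
- move=> x _; rewrite lee_fin; have := lam0 s x => ls0.
  by rewrite !addr_ge0 ?mulr_ge0 ?exprn_ge0 // ?addr_ge0 ?mulr_ge0 ?exprn_ge0 // ?addr_ge0 // invr_ge0.
- apply/measurable_EFinP; apply: measurable_funTS.
  apply: measurable_funD; first apply: measurable_funD.
  + exact: measurable_cst.
  + by apply: measurable_funM => //; exact: measurable_cst.
  + apply: measurable_funM; first exact: measurable_cst.
    apply: measurable_funD => //.
    apply: measurable_funM; first exact: measurable_cst.
    exact: measurable_funX.
- exact: measurable_funTS.
move=> x /hFj /andP[hx _]; rewrite lee_fin; have := lam0 s x => ls0.
set l := lam s x in hx ls0 *.
have := hG l ls0; apply: le_trans.
have hb : b * j.+1%:R <= b + b * l.
  by rewrite -natr1 mulrDr mulr1 addrC lerD2l ler_wpM2l.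
have uv : u <= c + b + b * l by rewrite /u -addrA lerD2l.
have g1 : 0 <= (1 + r%:R^-1) * l ^+ 2 by rewrite mulr_ge0 ?exprn_ge0 // addr_ge0 // invr_ge0.
rewrite lerD2r; apply: lerD.
  by apply: lerXn2r => //; rewrite nnegrE // (le_trans u0 uv).
by rewrite ler_wpM2r // ler_wpM2l // mulr_ge0.
Qed.

Lemma L_iter (R : realType) (r : nat) d (T : measurableType d) (P : probability T R)
  (Y : int -> T -> nat) (lam : int -> T -> R) (a b c rho K : R) :
  (0 < r)%N ->
  (forall t, measurable_fun setT (Y t)) -> (forall t, measurable_fun setT (lam t)) ->
  (forall t x, 0 <= lam t x) ->
  (forall t (A : set T) (k : nat), past_sigma Y (t - 1) A ->
     P (A `&` Y t @^-1` [set k]) = (\int[P]_(x in A) (nb_pmf r (lam t x) k)%:E)%E) ->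
  (forall t B, measurable B -> past_sigma Y (t - 1) (lam t @^-1` B)) ->
  (forall t x, lam t x <= c + a * (Y (t - 1) x)%:R + b * lam (t - 1) x) ->
  0 <= a -> 0 <= b -> 0 <= c -> 0 <= rho -> rho < 1 -> 0 <= K ->
  (forall x, 0 <= x -> (c + b + b * x) ^+ 2 + 2 * a * (c + b + b * x) * x +
      a ^+ 2 * (x + (1 + r%:R^-1) * x ^+ 2) <= rho * x ^+ 2 + K) ->
  forall (n : nat) (t : int) (A : set T), past_sigma Y (t - n%:Z - 1) A ->
  (\int[P]_(x in A) (lam t x ^+ 2)%:E <=
    (rho ^+ n)%:E * \int[P]_(x in A) (lam (t - n%:Z) x ^+ 2)%:E + (K / (1 - rho))%:E)%E.
Proof.
move=> r0 mY mlam lam0 hY hlam hf a0 b0 c0 rho0 rho1 K0 hG.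
have K'0 : 0 <= K / (1 - rho) by rewrite divr_ge0 // subr_ge0 ltW.
elim=> [|n IH] t A hA.
  rewrite subr0 expr0 mul1e; apply: leeDl; by rewrite lee_fin.
have hA1 : past_sigma Y (t - 1 - 1) A.
  by apply: past_mono hA; lia.
have hA2 : past_sigma Y (t - 1 - n%:Z - 1) A.
  by rewrite (_ : t - 1 - n%:Z = t - n.+1%:Z) //; lia.
have mA : measurable A by exact: past_meas hA.
apply: le_trans; first exact: (@L_step R r d T P Y lam t A a b c rho K r0 mY mlam lam0 (hY (t - 1)) (hlam (t - 1)) (hf t) a0 b0 c0 rho0 K0 hG hA1).
have := IH (t - 1) A hA2.
rewrite (_ : t - 1 - n%:Z = t - n.+1%:Z); last by lia.
move=> h.
set X := (\int[P]_(x in A) (lam (t - n.+1%:Z) x ^+ 2)%:E)%E in h *.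
have X0 : (0 <= X)%E by apply: integral_ge0 => x _; rewrite lee_fin exprn_ge0.
apply: (@le_trans _ _ (rho%:E * ((rho ^+ n)%:E * X + (K / (1 - rho))%:E) + K%:E)%E).
  apply: leeD; first by apply: lee_wpmul2l => //; rewrite lee_fin.
  rewrite -[X in (_ <= X)%E]mule1; apply: lee_wpmul2l; first by rewrite lee_fin.
  exact: probability_le1.
rewrite ge0_muleDr ?mule_ge0 ?lee_fin ?exprn_ge0 // muleA -EFinM -exprS -addeA -EFinM -EFinD.
apply: leeD => //; rewrite lee_fin le_eqVlt; apply/orP; left; apply/eqP.
field; by rewrite subr_eq0 gt_eqF.
Qed.

Lemma ex_small_pow (R : realType) (rho C : R) : 0 <= rho < 1 -> 0 <= C ->
  exists n : nat, rho ^+ n * C <= 1.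
Proof.
move=> /andP[r0 r1] C0.
have hc : `|rho| < 1 by rewrite ger0_norm.
have := cvg_expr hc; move/cvgr_lt => /(_ (C + 1)^-1).
rewrite invr_gt0 ltr_wpDl // => /(_ isT) [N _ hN]; exists N; have := hN N (leqnn N) => /= h.
rewrite -(@ler_pM2r _ (C + 1)^-1) ?invr_gt0 ?ltr_wpDl // mul1r.
apply: (le_trans _ (ltW h)); rewrite -mulrA ler_piMr ?exprn_ge0 //.
by rewrite ler_pdivrMr ?ltr_wpDl // mul1r lerDl.
Qed.

Lemma ex_small_tail (R : realType) d (T : measurableType d) (P : probability T R)
  (f : T -> R) (e : R) : measurable_fun setT f -> 0 < e ->
  exists L : nat, (P [set x | (L%:R < f x)%R] <= e%:E)%E.
Proof.
move=> mf e0; pose F (L : nat) := [set x | L%:R < f x].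
have [//|H] := pselect (exists L : nat, (P (F L) <= e%:E)%E).
have mF L : measurable (F L).
  rewrite (_ : F L = f @^-1` `]L%:R, +oo[); last first.
    by apply/seteqP; split => x; rewrite /= in_itv /= andbT.
  by rewrite -[_ @^-1` _]setTI; apply: mf => //; exact: measurable_itv.
have F0 : \bigcap_n F n = set0.
  apply/seteqP; split => [x hx|//].
  have := hx (Num.truncn `|f x|).+1 I; rewrite /F /=.
  have := truncn_itv (normr_ge0 (f x)) => /andP[_ h1] h2.
  have := lt_trans h1 h2; rewrite ltNge => /negP; apply; exact: ler_norm.
have := @nonincreasing_cvg_mu _ _ _ P F.
rewrite F0 measure0 => /(_ _ mF) h.
have {h}h : (P \o F) @ \oo --> 0%E.
  apply: h; first by apply: (le_lt_trans (probability_le1 P (mF 0%N))); exact: ltey.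
  - exact: measurable0.
  - move=> m n mn; apply/subsetPset => x; rewrite /F /= => hx; apply: le_lt_trans hx.
    by rewrite ler_nat.
have : (e%:E <= 0)%E.
  apply: (cvge_to_ge h); apply: nearW => n /=.
  by rewrite leNgt; apply/negP => hn; apply: H; exists n; rewrite ltW.
by rewrite lee_fin leNgt e0.
Qed.

Lemma stat_tail (R : realType) d (T : measurableType d) (P : probability T R)
  (Y : int -> T -> nat) (lam : int -> T -> R) :
  strictly_stationary P Y lam -> forall (u h : int) (L : R),
  P [set x | (L < lam u x)%R] = P [set x | (L < lam (u + h) x)%R].
Proof.
move=> st u h L.
have := st 1%N (fun _ => u) h (fun _ => setT) (fun _ => `]L, +oo[%classic) (fun _ => measurable_itv _).
have E v : \bigcap_(i in [set: 'I_1]) [set x | setT (Y v x) /\ `]L, +oo[%classic (lam v x)] =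
    [set x | (L < lam v x)%R].
  apply/seteqP; split => [x /(_ ord0 I) [_] /=|x /= hx i _]; first by rewrite in_itv /= andbT.
  by split => //=; rewrite in_itv /= andbT.
by rewrite (E u) (E (u + h)).
Qed.

Lemma L_fin (R : realType) (r : nat) d (T : measurableType d) (P : probability T R)
  (Y : int -> T -> nat) (lam : int -> T -> R) (a b c rho K : R) :
  (0 < r)%N ->
  (forall t, measurable_fun setT (Y t)) -> (forall t, measurable_fun setT (lam t)) ->
  (forall t x, 0 <= lam t x) ->
  (forall t (A : set T) (k : nat), past_sigma Y (t - 1) A ->
     P (A `&` Y t @^-1` [set k]) = (\int[P]_(x in A) (nb_pmf r (lam t x) k)%:E)%E) ->
  (forall t B, measurable B -> past_sigma Y (t - 1) (lam t @^-1` B)) ->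
  (forall t x, lam t x <= c + a * (Y (t - 1) x)%:R + b * lam (t - 1) x) ->
  0 <= a -> 0 <= b -> 0 <= c -> 0 <= rho -> rho < 1 -> 0 <= K ->
  (forall x, 0 <= x -> (c + b + b * x) ^+ 2 + 2 * a * (c + b + b * x) * x +
      a ^+ 2 * (x + (1 + r%:R^-1) * x ^+ 2) <= rho * x ^+ 2 + K) ->
  strictly_stationary P Y lam ->
  forall t, (\int[P]_x (lam t x ^+ 2)%:E <= (K / (1 - rho) + 2)%:E)%E.
Proof.
move=> r0 mY mlam lam0 hY hlam hf a0 b0 c0 rho0 rho1 K0 hG st t.
set K' := K / (1 - rho).
have K'0 : 0 <= K' by rewrite divr_ge0 // subr_ge0 ltW.
have mlt : measurable_fun setT (fun x => (lam t x ^+ 2)%:E : \bar R).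
  by apply/measurable_EFinP; exact: measurable_funX.
have lt0 x : (0 <= (lam t x ^+ 2)%:E)%E by rewrite lee_fin exprn_ge0.
pose D (M : nat) := [set x | (lam t x < M%:R)%R].
have mD M : measurable (D M).
  rewrite (_ : D M = lam t @^-1` `]-oo, M%:R[); last first.
    by apply/seteqP; split => x; rewrite /= in_itv /=.
  by rewrite -[_ @^-1` _]setTI; apply: mlam => //; exact: measurable_itv.
have bound M : (\int[P]_(x in D M) (lam t x ^+ 2)%:E <= (K' + 2)%:E)%E.
  have [L hL] := @ex_small_tail R d T P (lam t) ((M%:R ^+ 2 + 1)^-1) (mlam t)
     (ltac:(by rewrite invr_gt0 ltr_wpDl // exprn_ge0)).
  have [n hn] := @ex_small_pow R rho (L%:R ^+ 2) (ltac:(by rewrite rho0 rho1)) (exprn_ge0 _ (ler0n _ _)).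
  pose A := [set x | (lam (t - n%:Z) x <= L%:R)%R].
  have eA : A = lam (t - n%:Z) @^-1` `]-oo, L%:R].
    by apply/seteqP; split => x; rewrite /= in_itv /=.
  have hA : past_sigma Y (t - n%:Z - 1) A by rewrite eA; apply: hlam; exact: measurable_itv.
  have mA : measurable A by exact: past_meas hA.
  have mDA : measurable (D M `\` A) by exact: measurableD.
  apply: (@le_trans _ _ (\int[P]_(x in A `|` (D M `\` A)) (lam t x ^+ 2)%:E)%E).
    apply: ge0_subset_integral => //; first exact: measurableU.
    - exact: measurable_funTS.
    - move=> x Dx; have [xA|xA] := pselect (A x); first by left.
      by right.
  rewrite ge0_integral_setU //; last 2 first.
  - exact: measurable_funTS.
  - by apply/disj_setPS => x [xA [_ /(_ xA)]].
  have -> : (K' + 2)%:E = ((1 + K')%:E + 1%:E)%E by rewrite -EFinD; congr (_%:E); ring.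
  apply: leeD.
    apply: le_trans; first exact: (@L_iter R r d T P Y lam a b c rho K r0 mY mlam lam0 hY hlam hf a0 b0 c0 rho0 rho1 K0 hG n t A hA).
    rewrite EFinD -/K'; apply: leeD => //.
    apply: (@le_trans _ _ ((rho ^+ n)%:E * (L%:R ^+ 2)%:E)%E); last by rewrite -EFinM lee_fin.
    apply: lee_wpmul2l; first by rewrite lee_fin exprn_ge0.
    apply: (@le_trans _ _ (\int[P]_(x in A) (cst (L%:R ^+ 2)%:E x))%E).
      apply: ge0_le_integral => //.
      + by move=> x _; rewrite lee_fin exprn_ge0.
      + by apply/measurable_EFinP; apply: measurable_funTS; exact: measurable_funX.
      move=> x xA; rewrite lee_fin; apply: lerXn2r => //; rewrite nnegrE //.
    rewrite integral_cst //; rewrite -[X in (_ <= X)%E]mule1; apply: lee_wpmul2l.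
      by rewrite lee_fin exprn_ge0.
    exact: probability_le1.
  apply: (@le_trans _ _ (\int[P]_(x in D M `\` A) (cst (M%:R ^+ 2)%:E x))%E).
    apply: ge0_le_integral => //; try exact: measurable_funTS.
    move=> x [Dx _]; rewrite lee_fin; apply: lerXn2r => //; rewrite ?nnegrE //; exact: ltW.
  rewrite integral_cst //.
  apply: (@le_trans _ _ ((M%:R ^+ 2)%:E * (M%:R ^+ 2 + 1)^-1%:E)%E); last first.
    rewrite -EFinM lee_fin ler_pdivrMr ?ltr_wpDl ?exprn_ge0 // mul1r lerDl //.
  apply: lee_wpmul2l; first by rewrite lee_fin exprn_ge0.
  apply: le_trans hL.
  rewrite -[in X in (_ <= X)%E](subrK n%:Z t) -(@stat_tail R d T P Y lam st (t - n%:Z) n%:Z L%:R).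
  apply: le_measure; rewrite ?inE //.
  - rewrite (_ : [set x | (L%:R < lam (t - n%:Z) x)%R] = lam (t - n%:Z) @^-1` `]L%:R, +oo[).
      by rewrite -[_ @^-1` _]setTI; apply: mlam => //; exact: measurable_itv.
    by apply/seteqP; split => x; rewrite /= in_itv /= andbT.
  move=> x [_ /= xA]; rewrite ltNge; apply/negP => h; exact: xA.
pose H (j : nat) := lam t @^-1` `[j%:R, j.+1%:R[.
have mH j : measurable (H j).
  by rewrite /H -[_ @^-1` _]setTI; apply: mlam => //; exact: measurable_itv.
have eT : [set: T] = \bigcup_j H j.
  apply/seteqP; split => [x _|//].
  exists (Num.truncn (lam t x)) => //; rewrite /H /=.
  by rewrite in_itv /=; exact: truncn_itv.
have tH : trivIset setT H.
  apply/trivIsetP => i j _ _ ij; apply/seteqP; split => [x [hi hj]|//].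
  move: hi hj; rewrite /H /= !in_itv /= => /andP[i1 i2] /andP[j1 j2].
  have := le_lt_trans i1 j2; have := le_lt_trans j1 i2; rewrite !ltr_nat => h1 h2.
  have eij : i = j by apply/eqP; rewrite eqn_leq -ltnS h2 -ltnS h1.
  by rewrite eij eqxx in ij.
rewrite eT ge0_integral_bigcup //; last by rewrite -eT.
apply: lime_le; first by apply: is_cvg_nneseries => j _ _; apply: integral_ge0.
near=> M.
have sH := @sub_trivIset _ _ [set` index_iota 0 M] setT H (fun _ _ => I) tH.
rewrite -ge0_integral_bigsetU //; last 2 first.
- by rewrite /index_iota; exact: iota_uniq.
- exact: measurable_funTS.
apply: le_trans (bound M).
apply: ge0_subset_integral => //.
- exact: bigsetU_measurable.
- exact: measurable_funTS.
rewrite -bigcup_seq => x [j /= jM]; rewrite /H /= in_itv /= => /andP[_ h].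
apply: (lt_le_trans h); rewrite ler_nat.
by move: jM; rewrite mem_index_iota.
Unshelve. all: by end_near.
Qed.

Theorem proposition2
  (R : realType) (r : nat) (hr : (0 < r)%N)
  (X : topologicalType) (Theta : set X) (theta_star : X)
  (f : X -> nat -> R -> R) (a b : R)
  (d : measure_display) (T : measurableType d) (P : probability T R)
  (Y : int -> T -> nat) (lam : int -> T -> R) :
  compact Theta ->
  theta_star \in Theta ->
  (forall theta, theta \in Theta ->
     measurable_fun [set z : nat * R | 0 <= z.2] (fun z => f theta z.1 z.2)) ->
  (forall theta y l, theta \in Theta -> 0 <= l -> 0 <= f theta y l) ->
  0 <= a -> 0 <= b -> a + b < 1 ->
  (forall theta y y' l l', theta \in Theta -> 0 <= l -> 0 <= l' ->
     `|f theta y l - f theta y' l'| <= a * `|y%:R - y'%:R| + b * `|l - l'|) ->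
  (* (Y, lam) is a strictly stationary solution of the NB-INGARCH model *)
  (forall t, measurable_fun setT (Y t)) ->
  (forall t, measurable_fun setT (lam t)) ->
  (forall t x, 0 <= lam t x) ->
  (forall t x, lam t x = f theta_star (Y (t - 1) x) (lam (t - 1) x)) ->
  (forall t, (forall B, measurable B ->
     past_sigma Y (t - 1) (lam t @^-1` B))) ->
  (forall t (A : set T) (k : nat), past_sigma Y (t - 1) A ->
     P (A `&` Y t @^-1` [set k]) = (\int[P]_(x in A) (nb_pmf r (lam t x) k)%:E)%E) ->
  strictly_stationary P Y lam ->
  (a + b) ^+ 2 + a ^+ 2 / r%:R < 1 ->
  forall t, (\int[P]_x (((Y t x)%:R : R) ^+ 2)%:E < +oo)%E.

Proof.
move=> _ thT _ f0 a0 b0 ab1 hL mY mlam lam0 hrec hlam hY st hrho t.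
set th := theta_star in thT hrec *.
set c := f th 0%N 0.
have c0 : 0 <= c by apply: f0.
have hf s x : lam s x <= c + a * (Y (s - 1) x)%:R + b * lam (s - 1) x.
  rewrite hrec; have := hL th (Y (s - 1) x) 0%N (lam (s - 1) x) 0 thT (lam0 _ _) (lexx 0).
  rewrite (_ : (0%N)%:R = 0 :> R) // !subr0 (ger0_norm (ler0n _ _)) (ger0_norm (lam0 _ _)) => h.
  have := ler_norm (f th (Y (s - 1) x) (lam (s - 1) x) - c); rewrite -/c => h'.
  lra.
have r0 : 0 < r%:R :> R by rewrite ltr0n.
set rho0 := (a + b) ^+ 2 + a ^+ 2 / r%:R.
have rho00 : 0 <= rho0 by rewrite /rho0 addr_ge0 ?sqr_ge0 // divr_ge0 ?sqr_ge0.
set rho := (1 + rho0) / 2.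
set dl := (1 - rho0) / 2.
have dl0 : 0 < dl by rewrite /dl divr_gt0 // subr_gt0; exact: hrho.
set be := 2 * b * (c + b) + 2 * a * (c + b) + a ^+ 2.
set ga := (c + b) ^+ 2.
set K := ga + be ^+ 2 / (4 * dl).
have rho_ge0 : 0 <= rho by rewrite /rho divr_ge0 // addr_ge0.
have hr1 : rho0 < 1 by [].
have rho_lt1 : rho < 1 by rewrite /rho ltr_pdivrMr // mul1r; lra.
have K0 : 0 <= K by rewrite /K /ga addr_ge0 ?sqr_ge0 // divr_ge0 ?sqr_ge0 // mulr_ge0 // ltW.
have hG x : 0 <= x -> (c + b + b * x) ^+ 2 + 2 * a * (c + b + b * x) * x +
      a ^+ 2 * (x + (1 + r%:R^-1) * x ^+ 2) <= rho * x ^+ 2 + K.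
  move=> x0.
  have e1 : (c + b + b * x) ^+ 2 + 2 * a * (c + b + b * x) * x +
      a ^+ 2 * (x + (1 + r%:R^-1) * x ^+ 2) = rho0 * x ^+ 2 + be * x + ga.
    by rewrite /rho0 /be /ga; field; rewrite gt_eqF.
  have e2 : dl * x ^+ 2 + be ^+ 2 / (4 * dl) - be * x = (2 * dl * x - be) ^+ 2 / (4 * dl).
    by field; rewrite gt_eqF.
  have sq : 0 <= (2 * dl * x - be) ^+ 2 / (4 * dl) by rewrite divr_ge0 ?sqr_ge0 // mulr_ge0 // ltW.
  have e3 : rho = rho0 + dl by rewrite /rho /dl; field.
  rewrite e1 e3 /K; move: sq; rewrite -e2; lra.
have fin := @L_fin R r d T P Y lam a b c rho K hr mY mlam lam0 hY hlam hf a0 b0 c0 rho_ge0 rho_lt1 K0 hG st t.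
set I := (\int[P]_x (lam t x ^+ 2)%:E)%E in fin.
pose C : R := 2 + r%:R^-1.
have C0 : 0 <= C by rewrite /C addr_ge0 // invr_ge0.
have mlt : measurable_fun setT (fun x => (lam t x ^+ 2)%:E : \bar R).
  by apply/measurable_EFinP; exact: measurable_funX.
apply: (@le_lt_trans _ _ (1 + C%:E * I)%E); last first.
  apply: (@le_lt_trans _ _ (1 + C%:E * (K / (1 - rho) + 2)%:E)%E).
    by apply: leeD => //; apply: lee_wpmul2l => //; rewrite lee_fin.
  by rewrite -EFinM -EFinD ltry.
rewrite (eq_integral (fun x => (0 + 0 * (Y t x)%:R + 1 * (Y t x)%:R ^+ 2)%:E)); last first.
  by move=> x _; rewrite mul0r !add0r mul1r.
apply: le_trans.
  exact: (@L_cond R r d T P Y lam t setT 0 0 1 hr mY mlam lam0 (hY t) (@past_setT _ _ Y (t - 1)) (lexx 0) (lexx 0) ler01).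
apply: (@le_trans _ _ (\int[P]_x (1%:E + C%:E * (lam t x ^+ 2)%:E))%E).
  apply: ge0_le_integral => //.
  - move=> x _; rewrite lee_fin mul0r !add0r mul1r; have := lam0 t x => l0.
    by rewrite addr_ge0 // mulr_ge0 ?exprn_ge0 // addr_ge0 // invr_ge0.
  - apply/measurable_EFinP; apply: measurable_funD; first apply: measurable_funD.
    + exact: measurable_cst.
    + by apply: measurable_funM => //; exact: measurable_cst.
    + apply: measurable_funM; first exact: measurable_cst.
      apply: measurable_funD => //.
      apply: measurable_funM; first exact: measurable_cst.
      exact: measurable_funX.
  - apply: emeasurable_funD; first exact: measurable_cst.
    by apply: emeasurable_funM => //; exact: measurable_cst.
  move=> x _; rewrite -EFinM -EFinD lee_fin mul0r !add0r mul1r.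
  have := lam0 t x => l0; rewrite /C.
  have : lam t x <= 1 + lam t x ^+ 2 by nra.
  set l := lam t x; set q := r%:R^-1 => h.
  have : (1 + q) * l ^+ 2 <= (1 + q) * l ^+ 2 by [].
  nra.
rewrite ge0_integralD //; last 2 first.
- by move=> x _; rewrite mule_ge0 // lee_fin ?exprn_ge0.
- by apply: emeasurable_funM => //; exact: measurable_cst.
rewrite ge0_integralZl //; last by move=> x _; rewrite lee_fin exprn_ge0.
rewrite (_ : (\int[P]_x 1)%E = 1%E) //.
by rewrite integral_cst // mul1e; exact: probability_setT.
Qed.
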